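(* Let $H,A$ be as in the context and let $c\in H$ be a non-trivial central element. For $a\in A$ put $x_a=\langle a,c_{(1)}\rangle c_{(2)}-\langle a,c\rangle 1\in\ker\epsilon\subset H$. Then both $\widetilde{L_c}={\rm span}\{x_a\mid a\in A\}$ and $L_c={\rm span}\{x_a\mid a\in\ker\epsilon\subset A\}$ are stable under the quantum double action $h\triangleright x=h_{(1)}xSh_{(2)}$, $a\triangleright x=\langle a,x_{(1)}\rangle x_{(2)}-\langle a,x\rangle1$. Moreover, for $a,b\in A$ (with $a\in\ker\epsilon$ for elements of $L_c$), writing $\partial_x(b)=\langle x,b_{(1)}\rangle b_{(2)}$, $\Psi^{-1}(b\otimes x)=b_{(1)}\triangleright x\otimes b_{(2)}$, $[x,y]=x_{(1)}ySx_{(2)}$ and $\Psi(x\otimes y)=[x_{(1)},y]\otimes x_{(2)}-[x,y]\otimes1$: \[\partial_{x_a}(b)=\langle ab_{(1)},c\rangle b_{(2)}-\langle a,c\rangle b,\qquad \Psi^{-1}(b\otimes x_a)=x_{ab_{(1)}}\otimes b_{(2)},\] \[[x_a,x_b]=x_{b_{(2)}}\langle a(Sb_{(1)})b_{(3)},c\rangle-x_b\langle a,c\rangle,\qquad \Psi(x_a\otimes x_b)=x_{b_{(2)}}\otimes x_{a(Sb_{(1)})b_{(3)}}.\]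
   Context: $H,A$ are Hopf algebras over $\mathbb{C}$ with invertible antipodes, non-degenerately paired by a Hopf pairing $\langle\ ,\ \rangle$ ($\langle hg,a\rangle=\langle h,a_{(1)}\rangle\langle g,a_{(2)}\rangle$, $\langle h,ab\rangle=\langle h_{(1)},a\rangle\langle h_{(2)},b\rangle$, compatible with units, counits, antipodes); Sweedler notation. $[h,y]:=h_{(1)}ySh_{(2)}$ for $h\in H$. *)

(* Defs.v *)
(* Hopf algebras over a field, paired; tensors represented
   as finite lists of simple tensors, equality of tensors defined by the
   universal property of the tensor product (all bilinear/trilinear maps
   into any vector space agree). *)
From HB Require Import structures.
From mathcomp Require Import all_boot all_order all_algebra all_field.
Set Implicit Arguments. Unset Strict Implicit. Unset Printing Implicit Defensive.
Import GRing.Theory.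
Local Open Scope ring_scope.

Section Defs.
Variable K : fieldType.

Definition lin (V U : lmodType K) (f : V -> U) :=
  forall (k : K) (u v : V), f (k *: u + v) = k *: f u + f v.

Definition bilin (V W U : lmodType K) (b : V -> W -> U) :=
  (forall w, lin (fun v => b v w)) /\ (forall v, lin (b v)).

Definition trilin (V W X U : lmodType K) (b : V -> W -> X -> U) :=
  (forall w x, lin (fun v => b v w x)) /\ (forall v x, lin (fun w => b v w x))
  /\ (forall v w, lin (b v w)).

Definition teq2 (V W : lmodType K) (t1 t2 : seq (V * W)) :=
  forall (U : lmodType K) (b : V -> W -> U), bilin b ->
    \sum_(p <- t1) b p.1 p.2 = \sum_(p <- t2) b p.1 p.2.

Definition teq3 (V W X : lmodType K) (t1 t2 : seq (V * W * X)) :=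
  forall (U : lmodType K) (b : V -> W -> X -> U), trilin b ->
    \sum_(p <- t1) b p.1.1 p.1.2 p.2 = \sum_(p <- t2) b p.1.1 p.1.2 p.2.

(* A Hopf algebra structure with invertible antipode on the K-algebra H;
   cop h is a list of simple tensors representing Delta h (Sweedler). *)
Record hopf_alg (H : algType K) := HopfAlg {
  cop : H -> seq (H * H);
  eps : H -> K;
  ant : H -> H;
  cop_lin : forall (k : K) (u v : H),
    teq2 (cop (k *: u + v)) ([seq (k *: p.1, p.2) | p <- cop u] ++ cop v);
  cop_mul : forall u v : H,
    teq2 (cop (u * v)) [seq (p.1 * q.1, p.2 * q.2) | p <- cop u, q <- cop v];
  cop_one : teq2 (cop 1) [:: (1, 1)];
  coassoc : forall h : H,
    teq3 [seq (q.1, q.2, p.2) | p <- cop h, q <- cop p.1]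
         [seq (p.1, q.1, q.2) | p <- cop h, q <- cop p.2];
  eps_lin : forall (k : K) (u v : H), eps (k *: u + v) = k * eps u + eps v;
  eps_mul : forall u v : H, eps (u * v) = eps u * eps v;
  eps_one : eps 1 = 1;
  counit_l : forall h : H, \sum_(p <- cop h) eps p.1 *: p.2 = h;
  counit_r : forall h : H, \sum_(p <- cop h) eps p.2 *: p.1 = h;
  ant_lin : lin ant;
  ant_l : forall h : H, \sum_(p <- cop h) ant p.1 * p.2 = (eps h)%:A;
  ant_r : forall h : H, \sum_(p <- cop h) p.1 * ant p.2 = (eps h)%:A;
  ant_bij : bijective ant
}.

Record hopf_pairing (H A : algType K) (hH : hopf_alg H) (hA : hopf_alg A) :=
  HopfPairing {
  pair : H -> A -> K;
  pair_linl : forall (a : A) (k : K) (u v : H),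
    pair (k *: u + v) a = k * pair u a + pair v a;
  pair_linr : forall (h : H) (k : K) (a b : A),
    pair h (k *: a + b) = k * pair h a + pair h b;
  pair_mull : forall (h g : H) (a : A),
    pair (h * g) a = \sum_(p <- cop hA a) pair h p.1 * pair g p.2;
  pair_mulr : forall (h : H) (a b : A),
    pair h (a * b) = \sum_(p <- cop hH h) pair p.1 a * pair p.2 b;
  pair_onel : forall a : A, pair 1 a = eps hA a;
  pair_oner : forall h : H, pair h 1 = eps hH h;
  pair_ant : forall (h : H) (a : A), pair (ant hH h) a = pair h (ant hA a);
  nondeg_l : forall h : H, (forall a, pair h a = 0) -> h = 0;
  nondeg_r : forall a : A, (forall h, pair h a = 0) -> a = 0
}.

Variables (H A : algType K) (hH : hopf_alg H) (hA : hopf_alg A)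
  (P : hopf_pairing hH hA).

(* [h, y] = h_(1) y S h_(2), also the action h |> y *)
Definition bracket (h y : H) : H := \sum_(p <- cop hH h) p.1 * y * ant hH p.2.

Definition actA (a : A) (x : H) : H :=
  \sum_(p <- cop hH x) pair P p.1 a *: p.2 - (pair P x a)%:A.

Definition xa (c : H) (a : A) : H :=
  \sum_(p <- cop hH c) pair P p.1 a *: p.2 - (pair P c a)%:A.

Definition inspan (X : H -> Prop) (x : H) :=
  exists s : seq (K * H), (forall p, p \in s -> X p.2) /\
    x = \sum_(p <- s) p.1 *: p.2.

Definition Ltilde (c : H) := inspan (fun x => exists a : A, x = xa c a).
Definition Lc (c : H) :=
  inspan (fun x => exists a : A, eps hA a = 0 /\ x = xa c a).

Definition qd_stable (X : H -> Prop) :=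
  forall x, X x -> (forall h : H, X (bracket h x)) /\ (forall a : A, X (actA a x)).

Definition dpart (x : H) (b : A) : A := \sum_(p <- cop hA b) pair P x p.1 *: p.2.

Definition PsiInv (b : A) (x : H) : seq (H * A) :=
  [seq (actA p.1 x, p.2) | p <- cop hA b].

Definition Psi (x y : H) : seq (H * H) :=
  [seq (bracket p.1 y, p.2) | p <- cop hH x] ++ [:: (- bracket x y, 1)].

(* b_(1) (x) b_(2) (x) b_(3) = (Delta (x) id) Delta b *)
Definition cop2 (b : A) : seq (A * A * A) :=
  [seq (q.1, q.2, p.2) | p <- cop hA b, q <- cop hA p.1].

End Defs.

(* Main.v *)
Require Import Defs.
From HB Require Import structures.
From mathcomp Require Import all_boot all_order all_algebra all_field.
Set Implicit Arguments. Unset Strict Implicit. Unset Printing Implicit Defensive.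
Import GRing.Theory.
Local Open Scope ring_scope.

Section Lin.
Variable K : fieldType.
Implicit Types V U : lmodType K.

Lemma lin0 V U (f : V -> U) : lin f -> f 0 = 0.
Proof. move=> hf; have := hf 1 0 0; rewrite !scale1r addr0 => e.
by apply: (@addrI _ (f 0)); rewrite addr0 -e. Qed.
Lemma linD V U (f : V -> U) : lin f -> forall u v, f (u + v) = f u + f v.
Proof. by move=> hf u v; have := hf 1 u v; rewrite !scale1r. Qed.
Lemma linZ V U (f : V -> U) : lin f -> forall k u, f (k *: u) = k *: f u.
Proof. by move=> hf k u; have := hf k u 0; rewrite !addr0 (lin0 hf) addr0. Qed.
Lemma linN V U (f : V -> U) : lin f -> forall u, f (- u) = - f u.
Proof. by move=> hf u; rewrite -scaleN1r (linZ hf) scaleN1r. Qed.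
Lemma linB V U (f : V -> U) : lin f -> forall u v, f (u - v) = f u - f v.
Proof. by move=> hf u v; rewrite (linD hf) (linN hf). Qed.
Lemma lin_sum V U (f : V -> U) I (s : seq I) (F : I -> V) : lin f ->
  f (\sum_(i <- s) F i) = \sum_(i <- s) f (F i).
Proof. move=> hf; elim: s => [|x s IH]; first by rewrite !big_nil (lin0 hf).
by rewrite !big_cons (linD hf) IH. Qed.
Lemma linI V U (f : V -> U) : (forall u v, f (u + v) = f u + f v) ->
  (forall k u, f (k *: u) = k *: f u) -> lin f.
Proof. by move=> hD hZ k u v; rewrite hD hZ. Qed.

Definition linK V (f : V -> K) := forall k u v, f (k *: u + v) = k * f u + f v.
Lemma linK0 V (f : V -> K) : linK f -> f 0 = 0.
Proof. move=> hf; have := hf 1 0 0; rewrite scale1r addr0 mul1r => e.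
by apply: (@addrI _ (f 0)); rewrite addr0 -e. Qed.
Lemma linKD V (f : V -> K) : linK f -> forall u v, f (u + v) = f u + f v.
Proof. by move=> hf u v; have := hf 1 u v; rewrite scale1r mul1r. Qed.
Lemma linKZ V (f : V -> K) : linK f -> forall k u, f (k *: u) = k * f u.
Proof. by move=> hf k u; have := hf k u 0; rewrite !addr0 (linK0 hf) addr0. Qed.
Lemma linKN V (f : V -> K) : linK f -> forall u, f (- u) = - f u.
Proof. by move=> hf u; rewrite -scaleN1r (linKZ hf) mulN1r. Qed.
Lemma linKB V (f : V -> K) : linK f -> forall u v, f (u - v) = f u - f v.
Proof. by move=> hf u v; rewrite (linKD hf) (linKN hf). Qed.
Lemma linK_sum V (f : V -> K) I (s : seq I) (F : I -> V) : linK f ->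
  f (\sum_(i <- s) F i) = \sum_(i <- s) f (F i).
Proof. move=> hf; elim: s => [|x s IH]; first by rewrite !big_nil (linK0 hf).
by rewrite !big_cons (linKD hf) IH. Qed.
Lemma linKI V (f : V -> K) : (forall u v, f (u + v) = f u + f v) ->
  (forall k u, f (k *: u) = k * f u) -> linK f.
Proof. by move=> hD hZ k u v; rewrite hD hZ. Qed.
End Lin.

Section Hopf.
Variable K : fieldType.
Variables (B : algType K) (hB : hopf_alg B).

Lemma linMl (a : B) : lin (fun x : B => x * a).
Proof. by move=> k u v; rewrite mulrDl scalerAl. Qed.
Lemma linMr (a : B) : lin (fun x : B => a * x).
Proof. by move=> k u v; rewrite mulrDr scalerAr. Qed.
Lemma linC (V W U : lmodType K) (f : V -> W) (g : W -> U) : lin f -> lin g -> lin (fun x => g (f x)).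
Proof. by move=> hf hg k u v; rewrite hf hg. Qed.
Lemma linKC (V W : lmodType K) (f : V -> W) (g : W -> K) : lin f -> linK g -> linK (fun x => g (f x)).
Proof. by move=> hf hg k u v; rewrite hf hg. Qed.

Lemma antL : lin (ant hB). Proof. exact: ant_lin. Qed.
Lemma epsL : linK (eps hB). Proof. move=> k u v; exact: eps_lin. Qed.

Lemma copsum_lin (U : lmodType K) (G : B -> B -> U) : bilin G ->
  lin (fun h => \sum_(p <- cop hB h) G p.1 p.2).
Proof.
move=> bG k u v; rewrite (cop_lin hB k u v bG) big_cat big_map /= scaler_sumr.
congr (_ + _); apply: eq_bigr => p _; exact: (linZ (bG.1 _)).
Qed.

Lemma copsum_linK (U : lmodType K) (G : B -> B -> U) : bilin G ->
  forall k u v, \sum_(p <- cop hB (k *: u + v)) G p.1 p.2 =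
   k *: \sum_(p <- cop hB u) G p.1 p.2 + \sum_(p <- cop hB v) G p.1 p.2.
Proof. by move=> bG; exact: copsum_lin. Qed.

Lemma coassocS (U : lmodType K) (T : B -> B -> B -> U) (h : B) : trilin T ->
  \sum_(p <- cop hB h) \sum_(q <- cop hB p.1) T q.1 q.2 p.2 =
  \sum_(p <- cop hB h) \sum_(q <- cop hB p.2) T p.1 q.1 q.2.
Proof. by move=> tT; have := coassoc hB h tT; rewrite !big_allpairs_dep. Qed.

Lemma cop1S (U : lmodType K) (G : B -> B -> U) : bilin G ->
  \sum_(p <- cop hB 1) G p.1 p.2 = G 1 1.
Proof. by move=> bG; rewrite (cop_one hB bG) big_cons big_nil addr0. Qed.

Lemma copmulS (U : lmodType K) (G : B -> B -> U) (u v : B) : bilin G ->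
  \sum_(p <- cop hB (u * v)) G p.1 p.2 =
  \sum_(p <- cop hB u) \sum_(q <- cop hB v) G (p.1 * q.1) (p.2 * q.2).
Proof. by move=> bG; rewrite (cop_mul hB u v bG) big_allpairs_dep. Qed.

Lemma bilin_mul : bilin (fun x y : B => x * y).
Proof. split=> [w|v]; [exact: linMl | exact: linMr]. Qed.

Lemma ant1 : ant hB 1 = 1.
Proof.
have := ant_l hB 1; rewrite eps_one.
rewrite (cop1S (G := fun x y => ant hB x * y)) ?mulr1 ?scale1r //.
split=> [w|v]; last exact: linMr.
exact: (linC antL (linMl w)).
Qed.

Lemma epsH0 : eps hB 0 = 0. Proof. exact: (linK0 epsL). Qed.
Lemma epsHZ k u : eps hB (k *: u) = k * eps hB u. Proof. exact: (linKZ epsL). Qed.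
Lemma epsHA k : eps hB (k%:A) = k. Proof. by rewrite epsHZ eps_one mulr1. Qed.
Lemma eps_sum I (s : seq I) F : eps hB (\sum_(i <- s) F i) = \sum_(i <- s) eps hB (F i).
Proof. exact: (linK_sum _ _ epsL). Qed.
Lemma ant_sum I (s : seq I) F : ant hB (\sum_(i <- s) F i) = \sum_(i <- s) ant hB (F i).
Proof. exact: (lin_sum _ _ antL). Qed.
End Hopf.

Section Lin2.
Variable K : fieldType.
Lemma lin_sumF (V U : lmodType K) I (s : seq I) (G : V -> I -> U) :
  (forall i, lin (G^~ i)) -> lin (fun x => \sum_(i <- s) G x i).
Proof.
move=> hG k u v; rewrite scaler_sumr -big_split; apply: eq_bigr => i _; exact: hG.
Qed.
Lemma linS1 (V U : lmodType K) I (s : seq I) (g : I -> V -> K) (R : I -> U) :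
  (forall i, linK (g i)) -> lin (fun x => \sum_(i <- s) g i x *: R i).
Proof.
move=> hg; apply: lin_sumF => i k u v /=; by rewrite hg scalerDl scalerA.
Qed.
Lemma linS2 (V U : lmodType K) I (s : seq I) (r : I -> K) (M : I -> V -> U) :
  (forall i, lin (M i)) -> lin (fun x => \sum_(i <- s) r i *: M i x).
Proof.
move=> hM; apply: lin_sumF => i k u v /=; by rewrite hM scalerDr !scalerA mulrC.
Qed.
Lemma linId (V : lmodType K) : lin (fun x : V => x). Proof. by []. Qed.
Definition quadlin (V U : lmodType K) (F : V -> V -> V -> V -> U) :=
  [/\ (forall b d e, lin (fun a => F a b d e)), (forall a d e, lin (fun b => F a b d e)),
      (forall a b e, lin (fun d => F a b d e)) & (forall a b d, lin (F a b d))].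
End Lin2.

Section Four.
Variable K : fieldType.
Variables (B : algType K) (hB : hopf_alg B).
Notation cop := (cop hB).

Lemma four (U : lmodType K) (F : B -> B -> B -> B -> U) (h : B) : quadlin F ->
  \sum_(p <- cop h) \sum_(q <- cop p.1) \sum_(s <- cop p.2) F q.1 q.2 s.1 s.2 =
  \sum_(p <- cop h) \sum_(q <- cop p.1) \sum_(t <- cop q.2) F q.1 t.1 t.2 p.2.
Proof.
case=> F1 F2 F3 F4.
have bl1 : forall x y, bilin (fun u v => F x y u v) by move=> x y; split.
have bl2 : forall x z, bilin (fun u v => F x u v z) by move=> x z; split.
have bl3 : forall x, bilin (fun u v => F x u v x) by move=> x; split.
rewrite (coassocS hB (T := fun x y z => \sum_(t <- cop z) F x y t.1 t.2)); last first.
  split; [|split].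
  - move=> y z; exact: lin_sumF.
  - move=> x z; exact: lin_sumF.
  - move=> x y; exact: (copsum_lin hB (bl1 x y)).
rewrite (coassocS hB (T := fun x y z => \sum_(t <- cop y) F x t.1 t.2 z)); last first.
  split; [|split].
  - move=> y z; exact: lin_sumF.
  - move=> x z; exact: (copsum_lin hB (bl2 x z)).
  - move=> x y; exact: lin_sumF.
apply: eq_bigr => p _.
rewrite (coassocS hB (T := fun x y z => F p.1 x y z)) //.
Qed.
End Four.

Section KeyI.
Variable K : fieldType.
Variables (H : algType K) (hH : hopf_alg H) (c : H).
Hypothesis hc : forall h : H, c * h = h * c.
Variable f : H -> K.
Hypothesis hf : linK f.
Notation cop := (cop hH).
Notation S := (ant hH).

Let F1 a b d e := \sum_(q <- cop c) f (S a * q.1 * b) *: (q.2 * d * S e).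
Let F2 a b d e := \sum_(q <- cop c) f (S a * b * q.1) *: (d * q.2 * S e).

Let lS := antL hH.

Lemma F1lin : quadlin F1.
Proof.
rewrite /F1; split.
- move=> b d e; apply: linS1 => q.
  apply: (linKC (f := fun x => S x * q.1 * b)) hf.
  exact: (linC (f := fun x => S x * q.1) (g := fun y => y * b)) (linC lS (linMl _)) (linMl _).
- move=> a d e; apply: linS1 => q; exact: (linKC (f := fun x => S a * q.1 * x)) (linMr _) hf.
- move=> a b e; apply: linS2 => q.
  exact: (linC (f := fun x => q.2 * x) (g := fun y => y * S e)) (linMr _) (linMl _).
- move=> a b d; apply: linS2 => q; exact: (linC (f := S) (g := fun y => q.2 * d * y)) lS (linMr _).
Qed.

Lemma F2lin : quadlin F2.
Proof.
rewrite /F2; split.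
- move=> b d e; apply: linS1 => q.
  apply: (linKC (f := fun x => S x * b * q.1)) hf.
  exact: (linC (f := fun x => S x * b) (g := fun y => y * q.1)) (linC lS (linMl _)) (linMl _).
- move=> a d e; apply: linS1 => q.
  apply: (linKC (f := fun x => S a * x * q.1)) hf.
  exact: (linC (f := fun x => S a * x) (g := fun y => y * q.1)) (linMr _) (linMl _).
- move=> a b e; apply: linS2 => q.
  exact: (linC (f := fun x => x * q.2) (g := fun y => y * S e)) (linMl _) (linMl _).
- move=> a b d; apply: linS2 => q; exact: (linC (f := S) (g := fun y => d * q.2 * y)) lS (linMr _).
Qed.

Lemma linSc (V U : lmodType K) (g : V -> K) (w : U) : linK g -> lin (fun x => g x *: w).
Proof. by move=> hg k u v; rewrite hg scalerDl scalerA. Qed.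
Lemma linSc2 (V U : lmodType K) (M : V -> U) (r : K) : lin M -> lin (fun x => r *: M x).
Proof. by move=> hM k u v; rewrite hM scalerDr !scalerA mulrC. Qed.

Lemma midstep a e y :
  \sum_(t <- cop y) F1 a t.1 t.2 e = \sum_(t <- cop y) F2 a t.1 t.2 e.
Proof.
set G := fun u v => f (S a * u) *: (v * S e).
have bG : bilin G.
  split=> [w|v].
  - apply: (linSc (g := fun u => f (S a * u))); exact: linKC (linMr _) hf.
  - exact: (linSc2 (M := fun v => v * S e)) (linMl _).
have e1 := copmulS hH c y bG; rewrite hc (copmulS hH y c bG) in e1.
rewrite /F1 /F2 exchange_big /=.
transitivity (\sum_(p <- cop c) \sum_(q <- cop y) G (p.1 * q.1) (p.2 * q.2)).
  by apply: eq_bigr => p _; apply: eq_bigr => q _; rewrite /G !mulrA.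
rewrite -e1; apply: eq_bigr => p _; apply: eq_bigr => q _; by rewrite /G !mulrA.
Qed.

Let G1 u v := \sum_(q <- cop c) f (S u * q.1 * v) *: q.2.
Lemma G1lin : bilin G1.
Proof.
rewrite /G1; split.
- move=> w; apply: linS1 => q; apply: (linKC (f := fun x => S x * q.1 * w)) hf.
  exact: (linC (f := fun x => S x * q.1) (g := fun y => y * w)) (linC lS (linMl _)) (linMl _).
- move=> v; apply: linS1 => q; exact: (linKC (f := fun x => S v * q.1 * x)) (linMr _) hf.
Qed.
Let G2 u v := \sum_(q <- cop c) f q.1 *: (u * q.2 * S v).
Lemma G2lin : bilin G2.
Proof.
rewrite /G2; split.
- move=> w; apply: linS2 => q.
  exact: (linC (f := fun x => x * q.2) (g := fun y => y * S w)) (linMl _) (linMl _).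
- move=> v; apply: linS2 => q; exact: (linC (f := S) (g := fun y => v * q.2 * y)) lS (linMr _).
Qed.

Lemma contr1 h :
  \sum_(p <- cop h) \sum_(r <- cop p.1) \sum_(s <- cop p.2) F1 r.1 r.2 s.1 s.2 =
  \sum_(p <- cop h) G1 p.1 p.2.
Proof.
have lP := copsum_lin hH G1lin.
transitivity (\sum_(p <- cop h) eps hH p.2 *: \sum_(r <- cop p.1) G1 r.1 r.2).
  apply: eq_bigr => p _; rewrite scaler_sumr; apply: eq_bigr => r _.
  rewrite /F1 /G1 exchange_big /= scaler_sumr; apply: eq_bigr => q _.
  rewrite -scaler_sumr scalerA mulrC -scalerA; congr (_ *: _).
  under eq_bigr do rewrite -mulrA.
  by rewrite -mulr_sumr (ant_r hH) mulr_algr.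
under eq_bigr do rewrite -(linZ lP).
rewrite -(lin_sum _ _ lP) /=.
by rewrite (counit_r hH).
Qed.

Lemma contr2 h :
  \sum_(p <- cop h) \sum_(r <- cop p.1) \sum_(s <- cop p.2) F2 r.1 r.2 s.1 s.2 =
  \sum_(p <- cop h) G2 p.1 p.2.
Proof.
have lP := copsum_lin hH G2lin.
transitivity (\sum_(p <- cop h) eps hH p.1 *: \sum_(s <- cop p.2) G2 s.1 s.2).
  apply: eq_bigr => p _; rewrite exchange_big scaler_sumr; apply: eq_bigr => s _.
  rewrite /F2 /G2 exchange_big /= scaler_sumr; apply: eq_bigr => q _.
  rewrite -scaler_suml scalerA; congr (_ *: _).
  rewrite -(linK_sum _ _ hf) -mulr_suml (ant_l hH) mulr_algl.
  by rewrite (linKZ hf) mulrC.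
under eq_bigr do rewrite -(linZ lP).
rewrite -(lin_sum _ _ lP) /=.
by rewrite (counit_l hH).
Qed.

Lemma keyI h :
  \sum_(p <- cop h) G1 p.1 p.2 = \sum_(p <- cop h) G2 p.1 p.2.
Proof.
rewrite -contr1 -contr2 (four hH _ F1lin) (four hH _ F2lin).
apply: eq_bigr => p _; apply: eq_bigr => q _; exact: midstep.
Qed.
End KeyI.

Section Main.
Variable K : fieldType.
Variables (H A : algType K) (hH : hopf_alg H) (hA : hopf_alg A)
  (P : hopf_pairing hH hA) (c : H).
Hypothesis hc : forall h : H, c * h = h * c.
Notation pr := (pair P).
Notation SH := (ant hH).
Notation SA := (ant hA).

Lemma pl a : linK (fun h => pr h a). Proof. move=> k u v; exact: pair_linl. Qed.
Lemma prl h : linK (pr h). Proof. move=> k u v; exact: pair_linr. Qed.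

Lemma pair3 x y z b : pr (x * y * z) b =
  \sum_(t <- cop2 hA b) pr x t.1.1 * pr y t.1.2 * pr z t.2.
Proof.
rewrite pair_mull /cop2 big_allpairs_dep /=; apply: eq_bigr => p _.
by rewrite pair_mull mulr_suml.
Qed.

Lemma pairS3 h y b : \sum_(p <- cop hH h) pr (SH p.1 * y * p.2) b =
  \sum_(t <- cop2 hA b) pr h (SA t.1.1 * t.2) * pr y t.1.2.
Proof.
under eq_bigr do rewrite pair3.
rewrite exchange_big /=; apply: eq_bigr => t _.
rewrite pair_mulr mulr_suml; apply: eq_bigr => p _.
by rewrite pair_ant -!mulrA [pr y _ * _]mulrC.
Qed.

Lemma pairII h b : \sum_(t <- cop2 hA b) pr h (SA t.1.1 * t.2) * pr c t.1.2 =
  eps hH h * pr c b.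
Proof.
rewrite -pairS3.
under eq_bigr do rewrite -mulrA hc mulrA.
rewrite -(linK_sum _ _ (pl b)) -mulr_suml (ant_l hH) mulr_algl.
by rewrite (linKZ (pl b)).
Qed.

Lemma KEY h b : bracket hH h (xa P c b) =
  \sum_(t <- cop2 hA b) pr h (SA t.1.1 * t.2) *: xa P c t.1.2.
Proof.
have := keyI hH hc (pl b) h => /= eI.
rewrite /bracket /xa.
transitivity (\sum_(p <- cop hH h) \sum_(q <- cop hH c) pr q.1 b *: (p.1 * q.2 * SH p.2)
   - \sum_(p <- cop hH h) pr c b *: (p.1 * SH p.2)).
  rewrite -sumrB; apply: eq_bigr => p _.
  rewrite mulrBr mulrBl mulr_sumr mulr_suml mulr_algr -scalerAl.
  congr (_ - _).
  by apply: eq_bigr => q _; rewrite -scalerAr -scalerAl.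
rewrite -scaler_sumr (ant_r hH) scalerA mulrC.
rewrite -eI -(pairII h b).
under [in RHS]eq_bigr do rewrite scalerBr scaler_sumr.
rewrite sumrB scaler_suml; congr (_ - _); last first.
  by apply: eq_bigr => t _; rewrite scalerA.
rewrite [LHS]exchange_big [RHS]exchange_big /=; apply: eq_bigr => q _.
rewrite -scaler_suml pairS3 scaler_suml; apply: eq_bigr => t _.
by rewrite scalerA.
Qed.

Lemma prA k d : pr (k%:A) d = k * eps hA d.
Proof. by rewrite (linKZ (pl d)) pair_onel. Qed.

Lemma PX a d : pr (xa P c a) d = pr c (a * d) - pr c a * eps hA d.
Proof.
rewrite /xa (linKB (pl d)) prA (linK_sum _ _ (pl d)) pair_mulr; congr (_ - _).
by apply: eq_bigr => q _; rewrite (linKZ (pl d)).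
Qed.

Lemma linBf (V U : lmodType K) (f g : V -> U) : lin f -> lin g -> lin (fun x => f x - g x).
Proof.
move=> hf hg k u v; rewrite hf hg scalerBr opprD !addrA; congr (_ - _).
by rewrite -!addrA; congr (_ + _); rewrite addrC.
Qed.

Lemma xaL : lin (xa P c).
Proof.
apply: linBf; first by apply: linS1 => q; exact: prl.
exact: linSc (prl c).
Qed.

Lemma eps_antA a : eps hA (SA a) = eps hA a.
Proof. by rewrite -(pair_onel P) -(pair_ant P) (ant1 hH) pair_onel. Qed.

Lemma claim1 a b : dpart P (xa P c a) b =
  \sum_(p <- cop hA b) pr c (a * p.1) *: p.2 - pr c a *: b.
Proof.
rewrite /dpart -{3}(counit_l hA b) scaler_sumr -sumrB; apply: eq_bigr => p _.
by rewrite PX scalerBl scalerA.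
Qed.

Let Gact (b' : A) (u v : H) := pr u b' *: v.
Lemma Gact_bilin b' : bilin (Gact b').
Proof.
rewrite /Gact; split=> [w|v]; first exact: linSc (pl b').
by move=> k x y; rewrite scalerDr !scalerA mulrC.
Qed.

Lemma ACT b' a : actA P b' (xa P c a) = xa P c (a * b').
Proof.
have lP := copsum_lin hH (Gact_bilin b').
rewrite /actA PX.
transitivity (\sum_(p <- cop hH (xa P c a)) Gact b' p.1 p.2
   - (pr c (a * b') - pr c a * eps hA b')%:A) => //.
rewrite /xa (linB lP) (lin_sum _ _ lP) (linZ lP) /=.
rewrite (cop1S hH (Gact_bilin b')) /Gact pair_onel.
under eq_bigr do rewrite (linZ lP) /=.
rewrite -addrA; congr (_ + _); last first.
  by rewrite scalerA scalerBl opprB addKr.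
transitivity (\sum_(q <- cop hH c) \sum_(r <- cop hH q.2) (pr q.1 a * pr r.1 b') *: r.2).
  apply: eq_bigr => q _; rewrite scaler_sumr; apply: eq_bigr => r _.
  by rewrite /Gact scalerA.
rewrite -(coassocS hH (T := fun x y z => (pr x a * pr y b') *: z)).
  apply: eq_bigr => q _.
  by rewrite pair_mulr scaler_suml.
split; [|split].
- move=> y z k u v; by rewrite pair_linl mulrDl scalerDl !scalerA mulrA.
- move=> x z k u v; by rewrite pair_linl mulrDr scalerDl !scalerA mulrCA mulrA.
- move=> x y k u v; by rewrite scalerDr !scalerA mulrC.
Qed.

Lemma xa_sumZ I (s : seq I) (r : I -> K) (F : I -> A) :
  \sum_(i <- s) r i *: xa P c (F i) = xa P c (\sum_(i <- s) r i *: F i).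
Proof. rewrite (lin_sum _ _ xaL); apply: eq_bigr => i _; by rewrite (linZ xaL). Qed.

Lemma xa_counit b : \sum_(t <- cop2 hA b) eps hA (SA t.1.1 * t.2) *: xa P c t.1.2 = xa P c b.
Proof.
rewrite /cop2 big_allpairs_dep /=.
transitivity (\sum_(p <- cop hA b) eps hA p.2 *: xa P c p.1); last first.
  by rewrite xa_sumZ (counit_r hA).
apply: eq_bigr => p _.
rewrite -[in RHS](counit_l hA p.1) -xa_sumZ scaler_sumr; apply: eq_bigr => q _.
by rewrite eps_mul eps_antA scalerA mulrC.
Qed.

Lemma claim3 a b : bracket hH (xa P c a) (xa P c b) =
  \sum_(t <- cop2 hA b) pr c (a * SA t.1.1 * t.2) *: xa P c t.1.2
  - pr c a *: xa P c b.
Proof.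
rewrite KEY; under eq_bigr do rewrite PX scalerBl.
rewrite sumrB; congr (_ - _).
  by apply: eq_bigr => t _; rewrite mulrA.
rewrite -xa_counit scaler_sumr; apply: eq_bigr => t _; by rewrite scalerA.
Qed.

Lemma claim2 a b :
  teq2 (PsiInv P b (xa P c a)) [seq (xa P c (a * p.1), p.2) | p <- cop hA b].
Proof.
rewrite /PsiInv (eq_map (g := fun p => (xa P c (a * p.1), p.2))) //.
by move=> p /=; rewrite ACT.
Qed.

Lemma brL y : lin (fun h => bracket hH h y).
Proof.
apply: (copsum_lin hH (G := fun u v => u * y * SH v)); split=> [w|v].
  exact: (linC (f := fun x => x * y) (g := fun z => z * SH w)) (linMl _) (linMl _).
exact: (linC (f := SH) (g := fun z => v * y * z)) (antL hH) (linMr _).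
Qed.

Lemma bracket1 y : bracket hH 1 y = y.
Proof.
rewrite /bracket (cop1S hH (G := fun u v => u * y * SH v)) ?(ant1 hH) ?mul1r ?mulr1 //.
split=> [w|v].
  exact: (linC (f := fun x => x * y) (g := fun z => z * SH w)) (linMl _) (linMl _).
exact: (linC (f := SH) (g := fun z => v * y * z)) (antL hH) (linMr _).
Qed.

Lemma xa_def a' : \sum_(q <- cop hH c) pr q.1 a' *: q.2 = xa P c a' + pr c a' *: 1.
Proof. by rewrite /xa subrK. Qed.

Lemma lin_sumZ (V U : lmodType K) (f : V -> U) I (s : seq I) (r : I -> K) (F : I -> V) :
  lin f -> f (\sum_(i <- s) r i *: F i) = \sum_(i <- s) r i *: f (F i).
Proof. move=> hf; rewrite (lin_sum _ _ hf); apply: eq_bigr => i _; exact: (linZ hf). Qed.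

Lemma xaE a : xa P c a = \sum_(q <- cop hH c) pr q.1 a *: q.2 - pr c a *: 1.
Proof. by []. Qed.

Lemma claim4 a b : teq2 (Psi hH (xa P c a) (xa P c b))
  [seq (xa P c t.1.2, xa P c (a * SA t.1.1 * t.2)) | t <- cop2 hA b].
Proof.
move=> U be [bl1 bl2].
set xb := xa P c b.
rewrite /Psi big_cat big_map big_cons big_nil /= addr0 big_map.
have bG : bilin (fun u v => be (bracket hH u xb) v).
  split=> [w|v]; first exact: (linC (brL xb) (bl1 w)).
  exact: bl2.
have lP := copsum_lin hH bG.
rewrite (linN (bl1 1)) claim3 (linB (bl1 1)) (linZ (bl1 1)) (lin_sumZ _ _ _ (bl1 1)).
rewrite (xaE a) (linB lP) (lin_sumZ _ _ _ lP) (linZ lP) /= (cop1S hH bG) bracket1.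
set Y := _ *: be xb 1.
transitivity (\sum_(t <- cop2 hA b) be (xa P c t.1.2) (xa P c (a * SA t.1.1 * t.2)) +
  \sum_(t <- cop2 hA b) pr c (a * SA t.1.1 * t.2) *: be (xa P c t.1.2) 1 - Y
  - (\sum_(t <- cop2 hA b) pr c (a * SA t.1.1 * t.2) *: be (xa P c t.1.2) 1 - Y));
  last by rewrite opprB addrA subrK addrK.
congr (_ - _ - _).
rewrite -big_split /=.
transitivity (\sum_(q <- cop hH c) \sum_(r <- cop hH q.2) \sum_(t <- cop2 hA b)
   (pr q.1 a * pr r.1 (SA t.1.1 * t.2)) *: be (xa P c t.1.2) r.2).
  apply: eq_bigr => q _; rewrite scaler_sumr; apply: eq_bigr => r _.
  rewrite KEY (lin_sum _ _ (bl1 _)) scaler_sumr; apply: eq_bigr => t _.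
  by rewrite (linZ (bl1 _)) scalerA.
rewrite -(coassocS hH (T := fun x y z => \sum_(t <- cop2 hA b)
   (pr x a * pr y (SA t.1.1 * t.2)) *: be (xa P c t.1.2) z)); last first.
  split; [|split].
  - move=> y z; apply: lin_sumF => t k u v.
    by rewrite pair_linl mulrDl scalerDl !scalerA mulrA.
  - move=> x z; apply: lin_sumF => t k u v.
    by rewrite pair_linl mulrDr scalerDl !scalerA mulrCA mulrA.
  - move=> x y; apply: lin_sumF => t; exact: linSc2 (bl2 _).
transitivity (\sum_(q <- cop hH c) \sum_(t <- cop2 hA b)
   pr q.1 (a * (SA t.1.1 * t.2)) *: be (xa P c t.1.2) q.2).
  apply: eq_bigr => q _; rewrite exchange_big /=; apply: eq_bigr => t _.
  by rewrite pair_mulr scaler_suml.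
rewrite exchange_big /=; apply: eq_bigr => t _.
rewrite -(lin_sumZ _ _ _ (bl2 _)) -(linZ (bl2 _)) -(linD (bl2 _)).
by rewrite -!mulrA xa_def.
Qed.

Lemma inspan_sum (X : H -> Prop) (I : eqType) (s : seq I) (r : I -> K) (F : I -> H) :
  (forall i, X (F i)) -> inspan X (\sum_(i <- s) r i *: F i).
Proof.
move=> hX; exists [seq (r i, F i) | i <- s]; split; last by rewrite big_map.
move=> p hp; have [i _ ->] := mapP hp; exact: hX.
Qed.

Lemma inspan1 (X : H -> Prop) y : X y -> inspan X y.
Proof.
move=> hy; have := @inspan_sum X _ [:: tt] (fun _ => 1) (fun _ => y) (fun _ => hy).
by rewrite big_cons big_nil addr0 scale1r.
Qed.

Lemma inspan_add (X : H -> Prop) k u v : inspan X u -> inspan X v -> inspan X (k *: u + v).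
Proof.
move=> [s1 [h1 ->]] [s2 [h2 ->]].
exists ([seq (k * p.1, p.2) | p <- s1] ++ s2); split.
  move=> p; rewrite mem_cat => /orP [/mapP [q /h1 hq ->] //|]; exact: h2.
rewrite big_cat big_map scaler_sumr; congr (_ + _).
by apply: eq_bigr => p _; rewrite scalerA.
Qed.

Lemma inspan_lin (X : H -> Prop) (L : H -> H) x : lin L ->
  (forall y, X y -> inspan X (L y)) -> inspan X x -> inspan X (L x).
Proof.
move=> hL hX [s [hs ->]]; rewrite (lin_sumZ _ _ _ hL).
elim: s hs => [|p s IH] hs.
  by rewrite big_nil; exists [::]; rewrite big_nil.
rewrite big_cons; apply: inspan_add.
  by apply: hX; apply: hs; rewrite mem_head.
by apply: IH => q hq; apply: hs; rewrite in_cons hq orbT.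
Qed.

Lemma brR h : lin (bracket hH h).
Proof.
apply: lin_sumF => p.
exact: (linC (f := fun y => p.1 * y) (g := fun z => z * SH p.2)) (linMr _) (linMl _).
Qed.

Lemma actL a' : lin (actA P a').
Proof.
apply: linBf; first exact: (copsum_lin hH (Gact_bilin a')).
exact: linSc (pl a').
Qed.

Lemma Lt_stable : qd_stable P (Ltilde P c).
Proof.
move=> x hx; split=> [h|a'].
  apply: inspan_lin hx; first exact: brR.
  move=> y [a0 ->]; rewrite KEY; apply: inspan_sum => t; by exists t.1.2.
apply: inspan_lin hx; first exact: actL.
move=> y [a0 ->]; rewrite ACT; apply: inspan1; by exists (a0 * a').
Qed.

Lemma sum_eps0 h a0 : eps hA a0 = 0 ->
  \sum_(t <- cop2 hA a0) pr h (SA t.1.1 * t.2) * eps hA t.1.2 = 0.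
Proof.
move=> e0.
under eq_bigr do rewrite mulrC -(linKZ (prl h)).
rewrite -(linK_sum _ _ (prl h)) /cop2 big_allpairs_dep /=.
transitivity (pr h (\sum_(p <- cop hA a0) SA p.1 * p.2)); last first.
  by rewrite (ant_l hA) e0 scale0r (linK0 (prl h)).
congr (pr h _); apply: eq_bigr => p _.
rewrite -[in RHS](counit_r hA p.1) (lin_sumZ _ _ _ (antL hA)) mulr_suml.
by apply: eq_bigr => q _; rewrite scalerAl.
Qed.

Lemma Lc_stable : qd_stable P (Lc P c).
Proof.
move=> x hx; split=> [h|a'].
  apply: inspan_lin hx; first exact: brR.
  move=> y [a0 [e0 ->]]; rewrite KEY.
  have -> : \sum_(t <- cop2 hA a0) pr h (SA t.1.1 * t.2) *: xa P c t.1.2 =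
     \sum_(t <- cop2 hA a0) pr h (SA t.1.1 * t.2) *: xa P c (t.1.2 - eps hA t.1.2 *: 1).
    transitivity (\sum_(t <- cop2 hA a0) pr h (SA t.1.1 * t.2) *: xa P c t.1.2 -
       (\sum_(t <- cop2 hA a0) pr h (SA t.1.1 * t.2) * eps hA t.1.2) *: xa P c 1).
      by rewrite (sum_eps0 h e0) scale0r subr0.
    rewrite scaler_suml -sumrB.
    apply: eq_bigr => t _; by rewrite (linB xaL) (linZ xaL) [RHS]scalerBr [in RHS]scalerA.
  apply: inspan_sum => t; exists (t.1.2 - eps hA t.1.2 *: 1); split => //.
  by rewrite (linKB (epsL hA)) (linKZ (epsL hA)) eps_one mulr1 subrr.
apply: inspan_lin hx; first exact: actL.
move=> y [a0 [e0 ->]]; rewrite ACT; apply: inspan1; exists (a0 * a'); split => //.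
by rewrite eps_mul e0 mul0r.
Qed.
End Main.

Theorem proposition2p6 (H A : algType algC) (hH : hopf_alg H) (hA : hopf_alg A)
  (P : hopf_pairing hH hA) (c : H) :
  (forall h : H, c * h = h * c) ->
  ~ (exists k : algC, c = k%:A) ->
  qd_stable P (Ltilde P c) /\ qd_stable P (Lc P c) /\
  (forall a b : A,
     dpart P (xa P c a) b =
       \sum_(p <- cop hA b) pair P c (a * p.1) *: p.2 - pair P c a *: b
  /\ teq2 (PsiInv P b (xa P c a)) [seq (xa P c (a * p.1), p.2) | p <- cop hA b]
  /\ bracket hH (xa P c a) (xa P c b) =
       \sum_(t <- cop2 hA b) pair P c (a * ant hA t.1.1 * t.2) *: xa P c t.1.2
       - pair P c a *: xa P c b
  /\ teq2 (Psi hH (xa P c a) (xa P c b))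
          [seq (xa P c t.1.2, xa P c (a * ant hA t.1.1 * t.2)) | t <- cop2 hA b]).
Proof.
move=> hc _; split; first by apply: Lt_stable.
split; first by apply: Lc_stable.
move=> a b; split; first exact: claim1.
split; first exact: claim2.
split; first by apply: claim3.
by apply: claim4.
Qed.
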